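(* Let $\Theta=\{1,2\}$ and let $P_j:\Theta\to\Delta(Y_j)$, $j=1,\dots,m$, be experiments. Then there exists a Blackwell supremum $\overline P$ of $P_1,\dots,P_m$ with $\overline P\in\mathcal P(P_1,\dots,P_m)$. Consequently, for every decision problem $(A,u)$ and every $P\in\mathcal P(P_1,\dots,P_m)$, $V(\overline P;(A,u))\le V(P;(A,u))$.
   Context: $\Theta$ is a finite set of states. A decision problem is a pair $(A,u)$ with $A$ a finite nonempty action set and $u:\Theta\times A\to\mathbb{R}$. An experiment is a map $P:\Theta\to\Delta(Y)$ with $Y$ a finite signal set. Given experiments $P_j:\Theta\to\Delta(Y_j)$, $j=1,\dots,m$, let $\mathbf Y=Y_1\times\cdots\times Y_m$ and let $\mathcal P(P_1,\dots,P_m)$ be the set of experiments $P:\Theta\to\Delta(\mathbf Y)$ such that $\sum_{y_{-j}}P(y_1,\dots,y_m|\theta)=P_j(y_j|\theta)$ for all $\theta$, $j$, $y_j$. For a single experiment $P:\Theta\to\Delta(Y)$ its value is $V(P;(A,u))=\max_{\sigma:Y\to\Delta(A)}\sum_{\theta}\sum_{y}P(y|\theta)\sum_a\sigma(a|y)u(\theta,a)$. An experiment $P$ is more informative than (Blackwell dominates) $Q$ if $V(P;(A,u))\ge V(Q;(A,u))$ for every decision problem $(A,u)$. An experiment $R$ is a Blackwell supremum of $P_1,\dots,P_m$ if $R$ is more informative than every $P_j$, and every experiment $S$ more informative than all $P_j$ is also more informative than $R$. *)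

(* Defs.v *)
From HB Require Import structures.
From mathcomp Require Import all_boot all_order all_algebra.
From mathcomp Require Import classical_sets reals.
Set Implicit Arguments. Unset Strict Implicit. Unset Printing Implicit Defensive.
Import Order.TTheory GRing.Theory Num.Theory.
Local Open Scope ring_scope.
Local Open Scope classical_set_scope.

Definition Theta : finType := 'I_2.

Section Blackwell.
Variable R : realType.

Definition is_dist (Y : finType) (p : Y -> R) : Prop :=
  (forall y, 0 <= p y) /\ \sum_(y : Y) p y = 1.

Definition experiment (Y : finType) (P : Theta -> Y -> R) : Prop :=
  forall th : Theta, is_dist (P th).

Definition payoff (Y A : finType) (P : Theta -> Y -> R) (u : Theta -> A -> R)
  (sigma : Y -> A -> R) : R :=
  \sum_(th : Theta) \sum_(y : Y) P th y * \sum_(a : A) sigma y a * u th a.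

(* V(P;(A,u)) = max over sigma : Y -> Delta(A) of the expected payoff
   (written as the supremum of the set of attainable payoffs; it is attained). *)
Definition value (Y A : finType) (P : Theta -> Y -> R) (u : Theta -> A -> R) : R :=
  sup [set x | exists sigma : Y -> A -> R,
                 (forall y, is_dist (sigma y)) /\ x = payoff P u sigma].

Definition more_informative (Y Z : finType) (P : Theta -> Y -> R)
  (Q : Theta -> Z -> R) : Prop :=
  forall (A : finType), (0 < #|A|)%N -> forall u : Theta -> A -> R,
    value Q u <= value P u.

Definition blackwell_sup (m : nat) (Y : 'I_m -> finType)
  (P : forall j, Theta -> Y j -> R) (Z : finType) (Rb : Theta -> Z -> R) : Prop :=
  experiment Rb /\
  (forall j, more_informative Rb (P j)) /\
  (forall (Z' : finType) (S : Theta -> Z' -> R), experiment S ->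
     (forall j, more_informative S (P j)) -> more_informative S Rb).

Definition prodY (m : nat) (Y : 'I_m -> finType) : finType :=
  {dffun forall j : 'I_m, Y j}.

Definition in_couplings (m : nat) (Y : 'I_m -> finType)
  (P : forall j, Theta -> Y j -> R) (Q : Theta -> prodY Y -> R) : Prop :=
  experiment Q /\
  forall (th : Theta) (j : 'I_m) (yj : Y j),
    \sum_(y : prodY Y | y j == yj) Q th y = P j th yj.

End Blackwell.

(* Main.v *)
Require Import Defs.
From HB Require Import structures.
From mathcomp Require Import all_boot all_order all_algebra.
From mathcomp Require Import classical_sets reals topology normedtype derive.
From mathcomp Require Import ring lra.
Import Order.TTheory GRing.Theory Num.Theory.
Import numFieldNormedType.Exports.
Local Open Scope ring_scope.
Set Implicit Arguments. Unset Strict Implicit. Unset Printing Implicit Defensive.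

Section Basics.
Variable R : realType.

Definition ismax (I : Type) (Pr : I -> Prop) (F : I -> R) (M : R) :=
  (exists2 i, Pr i & F i = M) /\ (forall i, Pr i -> F i <= M).

Lemma ismax_uniq (I : Type) (Pr : I -> Prop) (F : I -> R) M1 M2 :
  ismax Pr F M1 -> ismax Pr F M2 -> M1 = M2.
Proof.
move=> [[i1 P1 <-] H1] [[i2 P2 <-] H2].
by apply/le_anti; rewrite H2 // H1.
Qed.

Lemma ismax_ex (I : finType) (F : I -> R) (i0 : I) :
  exists M, ismax (fun _ => True) F M.
Proof.
case: (@arg_maxP _ R I i0 xpredT F isT) => i _ Hi.
exists (F i); split; first by exists i.
by move=> j _; apply: Hi.
Qed.

Definition lpay (Y A : finType) (P : Theta -> Y -> R) (u : Theta -> A -> R) y a :=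
  \sum_th P th y * u th a.

Lemma value_eq (Y A : finType) (P : Theta -> Y -> R) (u : Theta -> A -> R) (g : Y -> R) :
  (forall y, ismax (fun _ => True) (lpay P u y) (g y)) ->
  value P u = \sum_y g y.
Proof.
move=> Hg.
have [ag Hag] : exists ag : Y -> A, forall y, lpay P u y (ag y) = g y.
  apply: (@fin_all_exists Y (fun=> A) (fun y a => lpay P u y a = g y)) => y.
  by have [[a _ Ha] _] := Hg y; exists a.
rewrite /value.
set E := (X in sup X).
have pay_le : forall sigma : Y -> A -> R, (forall y, is_dist (sigma y)) ->
    payoff P u sigma <= \sum_y g y.
  move=> sigma Hs; rewrite /payoff exchange_big /=.
  apply: ler_sum => y _.
  have -> : \sum_th P th y * (\sum_a sigma y a * u th a)
     = \sum_a sigma y a * lpay P u y a.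
    rewrite /lpay.
    under eq_bigr do rewrite big_distrr /=.
    rewrite exchange_big /=; apply: eq_bigr => a _.
    rewrite big_distrr /=; apply: eq_bigr => th _; rewrite mulrCA.
    by [].
  have [Hs0 Hs1] := Hs y.
  rewrite -[g y]mul1r -Hs1 big_distrl /=.
  apply: ler_sum => a _; apply: ler_wpM2l => //.
  by have [_ ->] := Hg y.
have inE : E (\sum_y g y).
  exists (fun y a => (a == ag y)%:R); split.
    move=> y; split; first by move=> a; rewrite ler0n.
    by rewrite (bigD1 (ag y)) //= eqxx big1 ?addr0 // => a /negbTE ->.
  rewrite /payoff exchange_big /=; apply: eq_bigr => y _.
  rewrite -(Hag y) /lpay; apply: eq_bigr => th _; congr (_ * _).
  by rewrite (bigD1 (ag y)) //= eqxx mul1r big1 ?addr0 // => a /negbTE ->; rewrite mul0r.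
apply/le_anti/andP; split.
  apply: ge_sup; first by exists (\sum_y g y).
  by move=> x [sigma [Hs ->]]; apply: pay_le.
apply: sup_upper_bound => //; split; first by exists (\sum_y g y).
by exists (\sum_y g y) => x [sigma [Hs ->]]; apply: pay_le.
Qed.

End Basics.

Section PL.
Variable R : realType.
Local Notation ismax := (@ismax R).

Definition hinge (x c : R) := Num.max 0 (x - c).
Lemma hingeE_ge x c : c <= x -> hinge x c = x - c.
Proof. by move=> h; rewrite /hinge max_r // subr_ge0. Qed.
Lemma hingeE_le x c : x <= c -> hinge x c = 0.
Proof. by move=> h; rewrite /hinge max_l // subr_le0. Qed.
Lemma hinge_ge0 x c : 0 <= hinge x c.
Proof. by rewrite /hinge le_max lexx. Qed.

Definition rep A B (ks : seq (R * R)) x :=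
  A + B * x + \sum_(k <- ks) k.1 * hinge x k.2.
Definition goodks (ks : seq (R * R)) :=
  all (fun k => (0 <= k.1) && (0 < k.2 < 1)) ks.

Variables (I : finType) (p mm : I -> R).
Definition lin i x := p i + mm i * x.

Lemma PL n : forall J : {set I}, #|J| = n.+1 -> exists A B ks, goodks ks /\
  forall x, 0 <= x <= 1 -> ismax (fun i => i \in J) (fun i => lin i x) (rep A B ks x).
Proof.
elim: n => [|n IH] J cJ.
  have [b ->] : exists b, J = [set b] by apply/cards1P/eqP.
  exists (p b), (mm b), [::]; split => // x _.
  rewrite /rep big_nil addr0; split; first by exists b; rewrite ?inE.
  by move=> i; rewrite inE => /eqP ->.
have [i0 i0J] : exists i0, i0 \in J by apply/card_gt0P; rewrite cJ.
case: (@arg_maxP _ R I i0 (mem J) mm i0J) => b bJ0 bmax.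
have bJ : b \in J := bJ0.
have cJ' : #|J :\ b| = n.+1 by move: cJ; rewrite (cardsD1 b J) bJ add1n => -[].
have [A [B [ks [gks Hf]]]] := IH _ cJ'.
set f := rep A B ks in Hf.
have F1 : forall x, 0 <= x <= 1 -> forall i, i \in J :\ b -> lin i x <= f x.
  by move=> x hx i hi; have [_ ->] := Hf x hx.
have F2 : forall x, 0 <= x <= 1 -> exists2 a, a \in J :\ b & lin a x = f x.
  by move=> x hx; have [[a ha <-] _] := Hf x hx; exists a.
have sub : forall i, i \in J :\ b -> i \in J by move=> i; rewrite in_setD1 => /andP[].
have mmb : forall i, i \in J :\ b -> mm i <= mm b by move=> i /sub /bmax.
have hJ : forall i, i \in J -> i != b -> i \in J :\ b.
  by move=> i iJ ib; rewrite in_setD1 ib.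
have h01 : 0 <= (1:R) <= 1 by rewrite ler01 lexx.
have h00 : 0 <= (0:R) <= 1 by rewrite lexx ler01.
have [h1|h1] := leP (lin b 1) (f 1).
  exists A, B, ks; split => // x hx; split.
    by have [a ha Ha] := F2 x hx; exists a; [apply: sub | exact: Ha].
  move=> i iJ; rewrite -/(f x); case: (eqVneq i b) => [->|ib]; last by apply: F1 => //; apply: hJ.
  have [a ha Ha] := F2 _ h01.
  have := mmb a ha; have := F1 x hx a ha; case/andP: hx => x0 x1.
  move: Ha h1; rewrite -/(f x) /lin; nra.
have [h0|h0] := leP (f 0) (lin b 0).
  exists (p b), (mm b), [::]; split => // x hx.
  rewrite /rep big_nil addr0; split; first by exists b.
  move=> i iJ; case: (eqVneq i b) => [->|ib]; first by [].
  have hi := hJ _ iJ ib.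
  have := mmb i hi; have := F1 _ h00 i hi; case/andP: hx => x0 x1.
  move: h0; rewrite /lin; nra.
pose cc a := if mm a < mm b then (p a - p b) / (mm b - mm a) else 0.
have [a0 a0J Ha0] := F2 _ h00.
case: (@arg_maxP _ R I a0 (mem (J :\ b)) cc a0J) => as_ asJ asmax.
set c := cc as_.
have P1 : forall a, a \in J :\ b -> forall x, 0 <= x <= 1 -> cc a <= x ->
    lin a x <= lin b x.
  move=> a ha x hx; rewrite /cc; case: (ltP (mm a) (mm b)) => hab.
    have hpos : 0 < mm b - mm a by rewrite subr_gt0.
    rewrite ler_pdivrMr // => hh.
    rewrite /lin; nra.
  move=> _; have e : mm a = mm b by apply/le_anti; rewrite hab mmb.
  have := F1 _ h01 a ha; move: h1; rewrite /lin e; lra.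
have cc0 : 0 < cc a0.
  rewrite /cc; case: (ltP (mm a0) (mm b)) => hab.
    apply: divr_gt0; last by rewrite subr_gt0.
    by move: Ha0 h0; rewrite /lin !mulr0 !addr0 subr_gt0 => ->.
  have e : mm a0 = mm b by apply/le_anti; rewrite hab mmb.
  have := F1 _ h01 a0 a0J; move: h1 h0 Ha0; rewrite /lin e; lra.
have cpos : 0 < c by apply: lt_le_trans cc0 (asmax _ a0J).
have hsl : mm as_ < mm b.
  move: cpos; rewrite /c /cc; case: (ltP (mm as_) (mm b)) => //; by rewrite ltxx.
have hpos : 0 < mm b - mm as_ by rewrite subr_gt0.
have key : forall x, lin b x - lin as_ x = (mm b - mm as_) * (x - c).
  move=> x; rewrite /c /cc hsl /lin; field; by rewrite gt_eqF.
have clt1 : c < 1.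
  have := F1 _ h01 as_ asJ; have := key 1; move: h1; nra.
have hc : 0 <= c <= 1 by rewrite (ltW cpos) (ltW clt1).
have L1 : forall x, 0 <= x <= 1 -> x <= c -> lin b x <= f x.
  move=> x hx hxc; have := F1 x hx as_ asJ; have := key x; nra.
have L2 : forall x, 0 <= x <= 1 -> c <= x -> f x <= lin b x.
  move=> x hx hxc; have [a ha <-] := F2 x hx.
  by apply: P1 => //; apply: le_trans hxc; apply: asmax.
have fc : f c = lin b c by apply/le_anti; rewrite L1 // L2.
pose sig := B + \sum_(k <- ks | k.2 < c) k.1.
have splitf : forall x, 0 <= x <= c -> f x = A + B * x + \sum_(k <- ks | k.2 < c) k.1 * hinge x k.2.
  move=> x /andP[x0 xc]; rewrite /f /rep (bigID (fun k => k.2 < c)) /=.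
  have -> : \sum_(k <- ks | ~~ (k.2 < c)) k.1 * hinge x k.2 = 0.
    apply: big1 => k; rewrite -leNgt => ck.
    by rewrite hingeE_le ?mulr0 // (le_trans xc ck).
  by rewrite addr0.
have sumk : forall x, c <= x -> \sum_(k <- ks | k.2 < c) k.1 * hinge x k.2 =
    \sum_(k <- ks | k.2 < c) k.1 * hinge c k.2 + (x - c) * \sum_(k <- ks | k.2 < c) k.1.
  move=> x cx; rewrite big_distrr -big_split /=; apply: eq_bigr => k kc.
  rewrite !hingeE_ge ?(ltW kc) ?(le_trans (ltW kc) cx) //; ring.
have siglt : sig < mm b.
  have e1 : f 1 - f c >= sig * (1 - c).
    have dec : forall x, f x = A + B * x + \sum_(k <- ks | k.2 < c) k.1 * hinge x k.2
        + \sum_(k <- ks | ~~ (k.2 < c)) k.1 * hinge x k.2.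
      by move=> x; rewrite /f /rep (bigID (fun k => k.2 < c)) /= addrA.
    rewrite !dec.
    have -> : \sum_(k <- ks | ~~ (k.2 < c)) k.1 * hinge c k.2 = 0.
      by apply: big1 => k; rewrite -leNgt => ck; rewrite hingeE_le ?mulr0.
    have := sumk 1 (ltW clt1).
    have : 0 <= \sum_(k <- ks | ~~ (k.2 < c)) k.1 * hinge 1 k.2.
      rewrite big_seq_cond; apply: sumr_ge0 => k /andP[kin _].
      have /allP/(_ k kin)/andP[k1 _] := gks.
      by apply: mulr_ge0 => //; apply: hinge_ge0.
    rewrite /sig; lra.
  move: h1 fc e1; rewrite /lin => h1 fc e1.
  have h2 : 0 < (mm b - sig) * (1 - c) by lra.
  by move: h2; rewrite pmulr_lgt0 ?subr_gt0.
exists A, B, ([seq k <- ks | k.2 < c] ++ [:: (mm b - sig, c)]); split.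
  rewrite /goodks all_cat all_filter /= cpos clt1 subr_ge0 (ltW siglt) !andbT.
  by apply/allP => k kin; apply/implyP => _; apply: (allP gks).
move=> x hx; rewrite /rep big_cat big_seq1 big_filter /=.
have [xc|xc] := leP x c.
  rewrite hingeE_le // mulr0 addr0 -splitf; last by case/andP: hx => -> _.
  split; first by have [a ha Ha] := F2 x hx; exists a; [apply: sub | exact: Ha].
  move=> i iJ; case: (eqVneq i b) => [->|ib]; first exact: L1.
  by apply: F1 => //; apply: hJ.
have cx := ltW xc.
rewrite hingeE_ge // sumk //.
have -> : A + B * x + (\sum_(k <- ks | k.2 < c) k.1 * hinge c k.2 +
   (x - c) * \sum_(k <- ks | k.2 < c) k.1 + (mm b - sig) * (x - c)) = lin b x.
  have := splitf c; rewrite lexx (ltW cpos) => /(_ isT); rewrite fc => e.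
  have -> : lin b x = lin b c + mm b * (x - c) by rewrite /lin; ring.
  rewrite e /sig; ring.
split; first by exists b.
move=> i iJ; case: (eqVneq i b) => [->|ib]; first by [].
by apply: le_trans (L2 x hx cx); apply: F1 => //; apply: hJ.
Qed.

End PL.

Section Dlemma.
Variable R : realType.

Definition t0 : Theta := @Ordinal 2 0 isT.
Definition t1 : Theta := @Ordinal 2 1 isT.

Lemma sumTheta (F : Theta -> R) : \sum_(th : Theta) F th = F t0 + F t1.
Proof.
rewrite /Theta big_ord_recl big_ord_recl big_ord0 addr0.
by congr (F _ + F _); apply: val_inj.
Qed.

Definition hingeV (Z : finType) (X : Theta -> Z -> R) (l : R) :=
  \sum_z Num.max 0 (l * X t1 z - (1 - l) * X t0 z).

Lemma ismax_scale (I : Type) (Pr : I -> Prop) (F : I -> R) M w :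
  0 <= w -> ismax Pr F M -> ismax Pr (fun i => w * F i) (w * M).
Proof.
move=> w0 [[i Pi <-] H]; split; first by exists i.
by move=> j Pj; apply: ler_wpM2l => //; apply: H.
Qed.

Lemma ismax_ext (I : Type) (Pr Pr' : I -> Prop) (F G : I -> R) M N :
  (forall i, Pr i <-> Pr' i) ->
  (forall i, F i = G i) -> M = N -> ismax Pr F M -> ismax Pr' G N.
Proof.
move=> PP FG <- [[i Pi Fi] H]; split.
  by exists i; [apply/(PP i) | rewrite -FG].
by move=> j Pj; rewrite -FG; apply: H; apply/(PP j).
Qed.

Definition Gfun (A0 B0 : R) (ks : seq (R * R)) (x0 x1 : R) :=
  A0 * x0 + (A0 + B0) * x1 + \sum_(k <- ks) k.1 * Num.max 0 ((1 - k.2) * x1 - k.2 * x0).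

Lemma Gfun_max (A : finType) (u : Theta -> A -> R) (a0 : A) :
  exists A0 B0 ks, goodks ks /\ forall x0 x1, 0 <= x0 -> 0 <= x1 ->
    ismax (fun _ => True) (fun a => x0 * u t0 a + x1 * u t1 a) (Gfun A0 B0 ks x0 x1).
Proof.
have cA : #|[set: A]| = (#|A|.-1).+1.
  by rewrite cardsT prednK //; apply/card_gt0P; exists a0.
have [A0 [B0 [ks [gks H]]]] := PL (fun a => u t0 a) (fun a => u t1 a - u t0 a) cA.
exists A0, B0, ks; split => // x0 x1 h0 h1.
have [w0|wpos] := eqVneq (x0 + x1) 0.
  have e0 : x0 = 0 by lra.
  have e1 : x1 = 0 by lra.
  have -> : Gfun A0 B0 ks x0 x1 = 0.
    rewrite /Gfun e0 e1 !mulr0 !addr0 big1 ?addr0 // => k _.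
    by rewrite !mulr0 subrr maxxx mulr0.
  rewrite e0 e1; split; first by exists a0 => //; rewrite !mul0r addr0.
  by move=> a _; rewrite !mul0r addr0.
have wp : 0 < x0 + x1 by rewrite lt_def wpos; lra.
set l := x1 / (x0 + x1).
have hl : 0 <= l <= 1.
  rewrite /l divr_ge0 ?ler_pdivrMr ?mul1r //=; lra.
have := ismax_scale (ltW wp) (H l hl).
apply: ismax_ext.
  by move=> a; rewrite inE.
  move=> a; rewrite /lin /l; field; by rewrite wpos.
rewrite /rep /Gfun mulrDr big_distrr /=; congr (_ + _).
  rewrite /l; field; by rewrite wpos.
apply: eq_bigr => k _; rewrite mulrCA; congr (_ * _).
rewrite /hinge maxr_pMr ?(ltW wp) // mulr0; congr (Num.max _ _).
rewrite /l; field; by rewrite wpos.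
Qed.

Lemma value_Gfun (Z A : finType) (X : Theta -> Z -> R) (u : Theta -> A -> R) A0 B0 ks :
  experiment X ->
  (forall x0 x1, 0 <= x0 -> 0 <= x1 ->
    ismax (fun _ => True) (fun a => x0 * u t0 a + x1 * u t1 a) (Gfun A0 B0 ks x0 x1)) ->
  value X u = A0 + (A0 + B0) + \sum_(k <- ks) k.1 * hingeV X (1 - k.2).
Proof.
move=> HX HG.
rewrite (@value_eq R Z A X u (fun z => Gfun A0 B0 ks (X t0 z) (X t1 z))); last first.
  move=> z; have [h0 _] := HX t0; have [h1 _] := HX t1.
  apply: ismax_ext (HG _ _ (h0 z) (h1 z)) => // a.
  by rewrite /lpay sumTheta.
have [_ s0] := HX t0; have [_ s1] := HX t1.
rewrite /Gfun big_split big_split /= -!big_distrr /= s0 s1 !mulr1.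
congr (_ + _); rewrite exchange_big /=; apply: eq_bigr => k _.
rewrite /hingeV big_distrr /=; apply: eq_bigr => z _.
by congr (_ * Num.max 0 (_ - _)); congr (_ * _); ring.
Qed.

Lemma D_lemma (Z Y : finType) (X : Theta -> Z -> R) (Q : Theta -> Y -> R) :
  experiment X -> experiment Q ->
  (forall l, 0 <= l <= 1 -> hingeV Q l <= hingeV X l) ->
  more_informative X Q.
Proof.
move=> HX HQ Hh A cA u.
have [a0 _] := card_gt0P cA.
have [A0 [B0 [ks [gks HG]]]] := Gfun_max u a0.
rewrite (value_Gfun HX HG) (value_Gfun HQ HG) lerD2l.
rewrite !big_seq; apply: ler_sum => k kin.
have /allP/(_ k kin)/andP[k1 /andP[k20 k21]] := gks.
apply: ler_wpM2l => //; apply: Hh; apply/andP; split; lra.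
Qed.

End Dlemma.

Section Hull.
Variable R : realType.

Definition hu (l : R) : Theta -> bool -> R :=
  fun th a => if a then (if th == t1 then l else - (1 - l)) else 0.

Lemma hinge_value (Z : finType) (X : Theta -> Z -> R) l :
  value X (hu l) = hingeV X l.
Proof.
rewrite /hingeV (@value_eq R Z bool X (hu l) (fun z => Num.max 0 (l * X t1 z - (1 - l) * X t0 z))) //.
move=> z; rewrite /lpay /=.
have e : forall a, \sum_th X th z * hu l th a =
    if a then l * X t1 z - (1 - l) * X t0 z else 0.
  move=> a; rewrite sumTheta /hu; case: a; last by rewrite !mulr0 addr0.
  have -> : (t0 == t1) = false by [].
  by rewrite eqxx; ring.
have [h|h] := leP 0 (l * X t1 z - (1 - l) * X t0 z).
  split; first by exists true => //; rewrite e.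
  by move=> a _; rewrite e; case: a.
split; first by exists false => //; rewrite e.
by move=> a _; rewrite e; case: a => //; apply: ltW.
Qed.

Lemma mi_hinge (Z Y : finType) (S : Theta -> Z -> R) (X : Theta -> Y -> R) l :
  more_informative S X -> hingeV X l <= hingeV S l.
Proof. by move=> H; rewrite -!hinge_value; apply: H; rewrite card_bool. Qed.

Lemma sum_in_le (Y : finType) (T : {set Y}) (v : Y -> R) :
  \sum_(y in T) v y <= \sum_y Num.max 0 (v y).
Proof.
rewrite big_mkcond /=; apply: ler_sum => y _.
by case: (y \in T); rewrite ?le_max ?lexx ?orbT.
Qed.

Lemma sum_in_eq (Y : finType) (v : Y -> R) :
  \sum_(y in [set y | 0 < v y]) v y = \sum_y Num.max 0 (v y).
Proof.
rewrite big_mkcond /=; apply: eq_bigr => y _; rewrite inE.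
by case: (ltP 0 (v y)) => h.
Qed.

Lemma hingeV_ge (Z : finType) (S : Theta -> Z -> R) l :
  experiment S -> 0 <= hingeV S l /\ 2 * l - 1 <= hingeV S l.
Proof.
move=> HS; split.
  by apply: sumr_ge0 => z _; rewrite le_max lexx.
have [_ s0] := HS t0; have [_ s1] := HS t1.
apply: (@le_trans _ _ (\sum_z (l * S t1 z - (1 - l) * S t0 z))).
  by rewrite sumrB -!big_distrr /= s0 s1; lra.
by apply: ler_sum => z _; rewrite le_max lexx orbT.
Qed.

Lemma below_all (ks : seq (R * R)) : (forall k, k \in ks -> 0 < k.2) ->
  exists l0, 0 < l0 /\ forall k, k \in ks -> l0 < k.2.
Proof.
elim: ks => [|k ks IH] H; first by exists 1; split => //; rewrite ltr01.
have [l0 [l00 Hl]] : exists l0, 0 < l0 /\ forall k, k \in ks -> l0 < k.2.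
  by apply: IH => k' k'in; apply: H; rewrite inE k'in orbT.
have k2 : 0 < k.2 by apply: H; rewrite inE eqxx.
exists (Num.min l0 (k.2 / 2)); split; first by rewrite lt_min l00 divr_gt0.
move=> k'; rewrite inE => /orP[/eqP ->|k'in].
  rewrite gt_min; apply/orP; right; lra.
by rewrite gt_min Hl.
Qed.

Lemma above_all (ks : seq (R * R)) : (forall k, k \in ks -> k.2 < 1) ->
  exists l1, l1 < 1 /\ forall k, k \in ks -> k.2 < l1.
Proof.
elim: ks => [|k ks IH] H; first by exists 0; split => //; rewrite ltr01.
have [l1 [l11 Hl]] : exists l1, l1 < 1 /\ forall k, k \in ks -> k.2 < l1.
  by apply: IH => k' k'in; apply: H; rewrite inE k'in orbT.
have k2 : k.2 < 1 by apply: H; rewrite inE eqxx.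
exists (Num.max l1 ((k.2 + 1) / 2)); split; first by rewrite gt_max l11 /=; lra.
move=> k'; rewrite inE => /orP[/eqP ->|k'in].
  rewrite lt_max; apply/orP; right; lra.
by rewrite lt_max Hl.
Qed.

End Hull.

Unset Implicit Arguments.
Section HullCons.
Variables (R : realType) (m : nat) (Y : 'I_m -> finType) (P : forall j, Theta -> Y j -> R).
Hypothesis HP : forall j, experiment (P j).

Definition Ip : finType := (bool + {j : 'I_m & {set Y j}})%type.
Definition pl (i : Ip) : R :=
  match i with inl b => if b then -1 else 0
  | inr t => - \sum_(y in tagged t) P (tag t) t0 y end.
Definition ml (i : Ip) : R :=
  match i with inl b => if b then 2 else 0
  | inr t => \sum_(y in tagged t) (P (tag t) t0 y + P (tag t) t1 y) end.

Lemma lin_inr t l : lin pl ml (inr t) l =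
  \sum_(y in tagged t) (l * P (tag t) t1 y - (1 - l) * P (tag t) t0 y).
Proof.
rewrite /lin /= big_distrl /= -sumrN -big_split /=; apply: eq_bigr => y _; ring.
Qed.

Lemma lin_le_hinge (Z : finType) (S : Theta -> Z -> R) l :
  experiment S -> (forall j, hingeV (P j) l <= hingeV S l) ->
  forall i, lin pl ml i l <= hingeV S l.
Proof.
move=> HS Hj [[|]|t].
- have [_ h] := hingeV_ge l HS; by rewrite /lin /=; lra.
- have [h _] := hingeV_ge l HS; by rewrite /lin /= mul0r addr0.
rewrite lin_inr; apply: le_trans (Hj (tag t)); exact: sum_in_le.
Qed.

Lemma sum_nth_seq (ks : seq (R * R)) (G : R * R -> R) :
  \sum_(k < size ks) G (nth (0, 0) ks k) = \sum_(kk <- ks) G kk.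
Proof. by rewrite (big_nth (0, 0)) big_mkord. Qed.

Lemma hull_exists : exists (EZ : finType) (E : Theta -> EZ -> R),
  experiment E /\
  (forall j l, 0 <= l <= 1 -> hingeV (P j) l <= hingeV E l) /\
  (forall (Z : finType) (S : Theta -> Z -> R), experiment S ->
     (forall j l, 0 <= l <= 1 -> hingeV (P j) l <= hingeV S l) ->
     forall l, 0 <= l <= 1 -> hingeV E l <= hingeV S l).
Proof.
have cI : #|[set: Ip]| = (#|Ip|.-1).+1.
  by rewrite cardsT prednK //; apply/card_gt0P; exists (inl false).
have [A [B [ks [gks H]]]] := PL pl ml cI.
set f := rep A B ks in H.
have Hub : forall l, 0 <= l <= 1 -> forall i, lin pl ml i l <= f l.
  by move=> l hl i; have [_ ->] := H l hl; rewrite ?inE.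
have Hwit : forall l, 0 <= l <= 1 -> exists i, lin pl ml i l = f l.
  by move=> l hl; have [[i _ <-] _] := H l hl; exists i.
have Hle : forall (Z : finType) (S : Theta -> Z -> R), experiment S ->
    forall l, 0 <= l <= 1 -> (forall j, hingeV (P j) l <= hingeV S l) -> f l <= hingeV S l.
  move=> Z S HS l hl Hj; have [i <-] := Hwit l hl; exact: lin_le_hinge.
have HPj : forall j l, 0 <= l <= 1 -> hingeV (P j) l <= f l.
  move=> j l hl; apply: le_trans (Hub l hl (inr (Tagged (fun j => {set Y j})
     [set y | 0 < l * P j t1 y - (1 - l) * P j t0 y]))).
  by rewrite lin_inr /= sum_in_eq.
have kP : forall k, k \in ks -> 0 <= k.1 /\ 0 < k.2 /\ k.2 < 1.
  by move=> k kin; have /allP/(_ k kin)/andP[-> /andP[-> ->]] := gks.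
have h00 : 0 <= (0:R) <= 1 by rewrite lexx ler01.
have h01 : 0 <= (1:R) <= 1 by rewrite lexx ler01.
have fsmall : forall l, (forall k, k \in ks -> l <= k.2) -> f l = A + B * l.
  move=> l hl; rewrite /f /rep big_seq big1 ?addr0 // => k kin.
  by rewrite hingeE_le ?mulr0 //; apply: hl.
have fbig : forall l, (forall k, k \in ks -> k.2 <= l) ->
    f l = A + B * l + \sum_(k <- ks) k.1 * (l - k.2).
  move=> l hl; rewrite /f /rep; congr (_ + _); rewrite !big_seq; apply: eq_bigr => k kin.
  by rewrite hingeE_ge //; apply: hl.
have pl_le0 : forall i, pl i <= 0.
  move=> [[|]|t] /=; rewrite ?lerN10 ?lexx //.
  rewrite oppr_le0; apply: sumr_ge0 => y _; have [h _] := HP (tag t) t0; exact: h.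
have A0 : A = 0.
  have e := fsmall 0 (fun k kin => ltW (proj1 (proj2 (kP k kin)))).
  rewrite mulr0 addr0 in e; apply/le_anti/andP; split.
    rewrite -e; have [i <-] := Hwit 0 h00; by rewrite /lin mulr0 addr0.
  by rewrite -e; have := Hub 0 h00 (inl false); rewrite /lin /= mul0r addr0.
have f1 : f 1 = 1.
  apply/le_anti/andP; split; last first.
    by have := Hub 1 h01 (inl true); rewrite /lin /=; lra.
  have [i <-] := Hwit 1 h01; move: i => [[|]|t]; rewrite /lin /=.
  - by lra.
  - by rewrite mul0r addr0 ler01.
  rewrite mulr1 -sumrN -big_split /=.
  have [h1 s1] := HP (tag t) t1.
  rewrite -s1 big_mkcond /=; apply: ler_sum => y _.
  by case: (y \in tagged t); rewrite ?h1 //; lra.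
have [l0 [l00 Hl0]] := below_all (fun k kin => proj1 (proj2 (kP k kin))).
have B0 : 0 <= B.
  pose l0' := Num.min l0 1.
  have hl0' : 0 <= l0' <= 1 by rewrite le_min ge_min lexx orbT (ltW l00) ler01.
  have hm : l0' <= l0 by rewrite ge_min lexx.
  have e := fsmall l0' (fun k kin => ltW (le_lt_trans hm (Hl0 k kin))).
  have := Hub l0' hl0' (inl false); rewrite e A0 /lin /= mul0r addr0 add0r.
  have : 0 < l0' by rewrite lt_min l00 ltr01.
  by move=> hp h; rewrite -(pmulr_lge0 _ hp).
have [l1 [l11 Hl1]] := above_all (fun k kin => proj2 (proj2 (kP k kin))).
pose K := \sum_(k <- ks) k.1.
pose KC := \sum_(k <- ks) k.1 * k.2.
have e1 : B + K - KC = 1.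
  rewrite -f1 fbig; last by move=> k kin; have [_ [_ h]] := kP k kin; apply: ltW.
  by rewrite A0 add0r mulr1 /K /KC -addrA -sumrB; congr (_ + _); apply: eq_bigr => k _; ring.
have KC1 : KC <= 1.
  pose l1' := Num.max l1 0.
  have hl1' : 0 <= l1' <= 1 by rewrite le_max lexx orbT ge_max (ltW l11) ler01.
  have hm : l1 <= l1' by rewrite le_max lexx.
  have e := fbig l1' (fun k kin => ltW (lt_le_trans (Hl1 k kin) hm)).
  have := Hub l1' hl1' (inl true); rewrite e A0 /lin /= add0r.
  have -> : \sum_(k <- ks) k.1 * (l1' - k.2) = l1' * K - KC.
    by rewrite /K /KC mulr_sumr -sumrB; apply: eq_bigr => k _; ring.
  have : l1' < 1 by rewrite gt_max l11 ltr01.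
  move: e1; nra.
pose EZ := (bool + 'I_(size ks))%type.
pose E : Theta -> EZ -> R := fun th e =>
  match e with
  | inl b => if b then (if th == t1 then B else 0) else (if th == t1 then 0 else 1 - KC)
  | inr k => let kk := nth (0, 0) ks k in
      if th == t1 then kk.1 * (1 - kk.2) else kk.1 * kk.2
  end.
have sumE : forall F : EZ -> R, \sum_(e : EZ) F e =
    F (inl true) + F (inl false) + \sum_(k < size ks) F (inr k).
  by move=> F; rewrite big_sumType /= big_bool.
have e01 : (t0 == t1) = false by [].
have kPn : forall k : 'I_(size ks), 0 <= (nth (0,0) ks k).1 /\ 0 < (nth (0,0) ks k).2 /\ (nth (0,0) ks k).2 < 1.
  by move=> k; apply: kP; apply: mem_nth.
have HE : experiment E.
  move=> th; split.
    move=> [[|]|k] /=; case: (th == t1); rewrite ?lexx //; try lra.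
    - have [h1 [h2 h3]] := kPn k; apply: mulr_ge0 => //; lra.
    - have [h1 [h2 h3]] := kPn k; apply: mulr_ge0 => //; lra.
  rewrite sumE /=.
  have : th = t0 \/ th = t1.
    case: th => -[|[|n]] hn; [left|right|by []]; by apply: val_inj.
  case=> ->; rewrite ?e01 ?eqxx.
    by rewrite (sum_nth_seq ks (fun kk => kk.1 * kk.2)) -/KC; lra.
  rewrite (sum_nth_seq ks (fun kk => kk.1 * (1 - kk.2))).
  have -> : \sum_(kk <- ks) kk.1 * (1 - kk.2) = K - KC.
    by rewrite /K /KC -sumrB; apply: eq_bigr => k _; ring.
  lra.
have hE : forall l, 0 <= l <= 1 -> hingeV E l = f l.
  move=> l /andP[lg0 lg1]; rewrite /hingeV sumE /= ?e01 ?eqxx.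
  rewrite (sum_nth_seq ks (fun kk => Num.max 0 (l * (kk.1 * (1 - kk.2)) - (1 - l) * (kk.1 * kk.2)))).
  rewrite /f /rep A0 add0r mulr0 subr0 mulr0 sub0r.
  rewrite (@max_r _ _ 0 (l * B)); last by apply: mulr_ge0.
  rewrite (@max_l _ _ 0); last first.
    rewrite oppr_le0; apply: mulr_ge0; lra.
  rewrite addr0 mulrC; congr (_ + _); rewrite !big_seq; apply: eq_bigr => k kin.
  have [h1 [h2 h3]] := kP k kin.
  rewrite /hinge maxr_pMr // mulr0; congr (Num.max _ _); ring.
exists EZ, E; split => //; split.
  by move=> j l hl; rewrite hE //; apply: HPj.
move=> Z S HS Hj l hl; rewrite hE //; apply: Hle => // j; exact: Hj.
Qed.

End HullCons.
Set Implicit Arguments.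

Section BT.
Variable R : realType.

Lemma cont_sum (T : topologicalType) (I : Type) (r : seq I) (F : I -> T -> R) :
  (forall i, continuous (F i)) -> continuous (fun x => \sum_(i <- r) F i x).
Proof.
move=> H; apply: (@continuous_big R I +%R 0 xpredT) => //.
exact: add_continuous.
Qed.

Lemma cont_mul (T : topologicalType) (f g : T -> R) :
  continuous f -> continuous g -> continuous (fun x => f x * g x).
Proof. by move=> hf hg x; apply: cvgM; [apply: hf | apply: hg]. Qed.

Lemma cont_sub (T : topologicalType) (f g : T -> R) :
  continuous f -> continuous g -> continuous (fun x => f x - g x).
Proof. by move=> hf hg x; apply: cvgB; [apply: hf | apply: hg]. Qed.

Variables (Z Y : finType).
Let n := #|{: Z * Y}|.
Definition kof (v : 'rV[R]_n) (z : Z) (y : Y) : R := v ord0 (enum_rank (z, y)).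
Definition rowof (K : Z -> Y -> R) : 'rV[R]_n :=
  \row_i K (enum_val i).1 (enum_val i).2.

Lemma kof_rowof K z y : kof (rowof K) z y = K z y.
Proof. by rewrite /kof /rowof mxE enum_rankK. Qed.

Lemma kof_cont z y : continuous (fun v => kof v z y).
Proof. exact: coord_continuous. Qed.


Definition stoch (K : Z -> Y -> R) := forall z, (forall y, 0 <= K z y) /\ \sum_y K z y = 1.

Definition Cset : set 'rV[R]_n :=
  [set v : 'rV[R]_n | (forall i, `[0, 1]%classic (v ord0 i))] `&`
  [set v | \sum_z (\sum_y kof v z y - 1) ^+ 2 = 0].

Lemma stoch_le1 K z y : stoch K -> K z y <= 1.
Proof.
move=> HK; have [h0 h1] := HK z; rewrite -h1 (bigD1 y) //= lerDl.
by apply: sumr_ge0 => y' _; apply: h0.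
Qed.

Lemma Cset_rowof K : stoch K -> Cset (rowof K).
Proof.
move=> HK; split.
  move=> i; rewrite /= in_itv /= /rowof mxE.
  by have [h0 _] := HK (enum_val i).1; rewrite h0 stoch_le1.
rewrite /= big1 // => z _.
under eq_bigr do rewrite kof_rowof.
by have [_ ->] := HK z; rewrite subrr expr0n.
Qed.

Lemma Cset_stoch v : Cset v -> stoch (kof v).
Proof.
move=> [hb hs] z; split.
  by move=> y; have := hb (enum_rank (z, y)); rewrite /= in_itv /= => /andP[].
move/eqP: hs; rewrite psumr_eq0 => [/allP/(_ z)|]; last by move=> i _; apply: sqr_ge0.
rewrite mem_index_enum => /(_ isT)/implyP/(_ isT).
by rewrite sqrf_eq0 subr_eq0 => /eqP.
Qed.

Lemma Cset_compact : compact Cset.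
Proof.
have cB : compact [set v : 'rV[R]_n | forall i, `[0, 1]%classic (v ord0 i)].
  have := @rV_compact R n (fun=> `[0, 1]%classic) (fun _ => @segment_compact R 0 1).
  exact.
apply: (subclosed_compact _ cB); last by move=> v [].
apply: closedI; first by apply: compact_closed => //; apply: norm_hausdorff.
apply: (@preimage_closed _ R (fun v => \sum_z (\sum_y kof v z y - 1) ^+ 2) [set 0]).
  move=> v _; apply: cont_sum => z.
  rewrite /GRing.exp /=.
  apply: cont_mul; apply: cont_sub; try apply: cst_continuous;
    apply: cont_sum => y; apply: kof_cont.
exact: closed_eq.
Qed.

End BT.

Section BTmain.
Variables (R : realType) (Z Y : finType).

Definition Phi (S : Theta -> Z -> R) (Q : Theta -> Y -> R) (K : Z -> Y -> R) :=
  \sum_th \sum_y (Q th y - \sum_z S th z * K z y) ^+ 2.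

Lemma Phi_cont S Q : continuous (fun v : 'rV[R]_#|{: Z * Y}| => Phi S Q (kof v)).
Proof.
apply: cont_sum => th; apply: cont_sum => y.
rewrite /GRing.exp /=; apply: cont_mul; apply: cont_sub; try apply: cst_continuous;
  apply: cont_sum => z; apply: cont_mul; try apply: cst_continuous; apply: kof_cont.
Qed.

Lemma Phi_min S Q : (exists y0 : Y, True) ->
  exists2 K, stoch K & forall K', stoch K' -> Phi S Q K <= Phi S Q K'.
Proof.
move=> [y0 _].
have ne : (@Cset R Z Y !=set0)%classic.
  exists (rowof (fun (z : Z) (y : Y) => (y == y0)%:R)); apply: Cset_rowof => z; split.
    by move=> y; rewrite ler0n.
  by rewrite (bigD1 y0) //= eqxx big1 ?addr0 // => y /negbTE ->.
have [v vC Hv] := compact_EVT_min ne (@Cset_compact R Z Y) (continuous_subspaceT (@Phi_cont S Q)).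
rewrite in_setE in vC.
exists (kof v); first exact: Cset_stoch.
move=> K' HK'; have := Hv (rowof K').
rewrite in_setE => /(_ (Cset_rowof HK')).
suff -> : kof (rowof K') = K' by [].
by apply/boolp.funext => z; apply/boolp.funext => y; rewrite kof_rowof.
Qed.

End BTmain.

Section BTfinal.
Variables (R : realType) (Z Y : finType).

Lemma psum_le0 (I : finType) (F : I -> R) :
  (forall i, 0 <= F i) -> \sum_i F i <= 0 -> forall i, F i = 0.
Proof.
move=> h0 hle.
have e : \sum_i F i = 0 by apply/le_anti; rewrite hle sumr_ge0.
by move=> i; apply: (psumr_eq0P (fun i _ => h0 i) e).
Qed.

Lemma dsum_lin (F G H : Theta -> Y -> R) (e : R) :
  \sum_th \sum_y (F th y - 2 * e * G th y + e ^+ 2 * H th y) =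
  \sum_th \sum_y F th y - 2 * e * (\sum_th \sum_y G th y) + e ^+ 2 * (\sum_th \sum_y H th y).
Proof.
rewrite !mulr_sumr -sumrB -big_split /=; apply: eq_bigr => th _.
by rewrite !mulr_sumr -sumrB -big_split.
Qed.

Lemma BT (S : Theta -> Z -> R) (Q : Theta -> Y -> R) :
  experiment Q -> more_informative S Q ->
  exists2 K, stoch K & forall th y, Q th y = \sum_z S th z * K z y.
Proof.
move=> HQ HSQ.
have [y0 _] : exists y0 : Y, True.
  case: (pickP (fun _ : Y => true)) => [y _|h]; first by exists y.
  have [_ s] := HQ t0; move: s; rewrite big_pred0 // => /esym/eqP; by rewrite oner_eq0.
have [K HK Kmin] := Phi_min S Q (ex_intro _ y0 I).
pose d th y := Q th y - \sum_z S th z * K z y.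
have var : forall s, stoch s ->
    \sum_th \sum_y d th y * (\sum_z S th z * (s z y - K z y)) <= 0.
  move=> s Hs.
  pose D th y := \sum_z S th z * (s z y - K z y).
  pose a := \sum_th \sum_y d th y * D th y.
  pose b := \sum_th \sum_y D th y ^+ 2.
  have b0 : 0 <= b by apply: sumr_ge0 => th _; apply: sumr_ge0 => y _; apply: sqr_ge0.
  have key : forall e, Phi S Q (fun z y => (1 - e) * K z y + e * s z y) =
      Phi S Q K - 2 * e * a + e ^+ 2 * b.
    move=> e; rewrite /Phi /a /b -dsum_lin; apply: eq_bigr => th _; apply: eq_bigr => y _.
    have -> : \sum_z S th z * ((1 - e) * K z y + e * s z y) =
        \sum_z S th z * K z y + e * D th y.
      rewrite /D mulr_sumr -big_split /=; apply: eq_bigr => z _; ring.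
    rewrite /d; ring.
  have stmix : forall e, 0 <= e <= 1 -> stoch (fun z y => (1 - e) * K z y + e * s z y).
    move=> e /andP[e0 e1] z; have [hk0 hk1] := HK z; have [hs0 hs1] := Hs z; split.
      move=> y; apply: addr_ge0; apply: mulr_ge0 => //; lra.
    by rewrite big_split /= -!mulr_sumr hk1 hs1; ring.
  rewrite -/D -/a leNgt; apply/negP => apos.
  pose e := a / (a + b).
  have ab : 0 < a + b by lra.
  have e0 : 0 < e by apply: divr_gt0.
  have e1 : e <= 1 by rewrite ler_pdivrMr // mul1r; lra.
  have eab : e * (a + b) = a by rewrite /e mulfVK // gt_eqF.
  have := Kmin _ (stmix e (introT andP (conj (ltW e0) e1))); rewrite key.
  nra.
have [gQ HgQ] : exists gQ : Y -> R, forall y, ismax (fun _ => True) (lpay Q d y) (gQ y).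
  apply: (@fin_all_exists Y (fun=> R) (fun y g => ismax (fun _ => True) (lpay Q d y) g)) => y.
  exact: ismax_ex y0.
have [gS HgS] : exists gS : Z -> R, forall z, ismax (fun _ => True) (lpay S d z) (gS z).
  apply: (@fin_all_exists Z (fun=> R) (fun z g => ismax (fun _ => True) (lpay S d z) g)) => z.
  exact: ismax_ex y0.
have [az Haz] : exists az : Z -> Y, forall z, lpay S d z (az z) = gS z.
  apply: (@fin_all_exists Z (fun=> Y) (fun z a => lpay S d z a = gS z)) => z.
  by have [[a _ Ha] _] := HgS z; exists a.
have le1 : \sum_th \sum_y Q th y * d th y <= value Q d.
  rewrite (value_eq HgQ) exchange_big /=; apply: ler_sum => y _.
  by have [_ H] := HgQ y; apply: (H y).
pose sg z y : R := (y == az z)%:R.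
have Hsg : stoch sg.
  move=> z; split; first by move=> y; rewrite /sg ler0n.
  by rewrite /sg (bigD1 (az z)) //= eqxx big1 ?addr0 // => y /negbTE ->.
have le2 : value S d = \sum_th \sum_y d th y * (\sum_z S th z * sg z y).
  rewrite (value_eq HgS); under eq_bigr do rewrite -Haz.
  rewrite /lpay exchange_big /=; apply: eq_bigr => th _.
  under [RHS]eq_bigr do rewrite mulr_sumr.
  rewrite exchange_big /=; apply: eq_bigr => z _.
  rewrite (bigD1 (az z)) //= /sg eqxx mulr1 big1 ?addr0; first by rewrite mulrC.
  by move=> y /negbTE ->; rewrite mulr0 mulr0.
have le3 := var _ Hsg.
have cY : (0 < #|Y|)%N by apply/card_gt0P; exists y0.
have := HSQ Y cY d; rewrite le2 => le4.
have hd : \sum_th \sum_y d th y ^+ 2 <= 0.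
  have e : \sum_th \sum_y d th y ^+ 2 = \sum_th \sum_y Q th y * d th y
      - \sum_th \sum_y d th y * (\sum_z S th z * sg z y)
      + \sum_th \sum_y d th y * (\sum_z S th z * (sg z y - K z y)).
    rewrite -sumrB -big_split /=; apply: eq_bigr => th _.
    rewrite -sumrB -big_split /=; apply: eq_bigr => y _.
    have -> : \sum_z S th z * (sg z y - K z y) =
      \sum_z S th z * sg z y - \sum_z S th z * K z y.
      by rewrite -sumrB; apply: eq_bigr => z _; ring.
    rewrite /d; ring.
  rewrite e; lra.
exists K => // th y.
have h1 := psum_le0 (fun th => sumr_ge0 _ (fun y _ => sqr_ge0 (d th y))) hd th.
have := psum_le0 (fun y => sqr_ge0 (d th y)) (ltac:(by rewrite h1)) y.
by move/eqP; rewrite sqrf_eq0 subr_eq0 => /eqP.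
Qed.

End BTfinal.

Section Final.
Variable R : realType.

Lemma sum_prod (m : nat) (Y : 'I_m -> finType) (G : forall j, Y j -> R) :
  \sum_(y : {dffun forall j, Y j}) \prod_j G j (y j) = \prod_j \sum_(x : Y j) G j x.
Proof.
rewrite (reindex (@dffun_of_fprod _ Y)) /=; last by apply: onW_bij; apply: dffun_of_fprod_bij.
pose P_ j := [ffun x => G j x].
transitivity (\sum_(t : fprod Y | predT (fprod_fun t)) \prod_(j : 'I_m) P_ j (t j)).
  by apply: eq_bigr => t _; apply: eq_bigr => j _; rewrite !ffunE.
rewrite (big_fprod_dep (1:R) +%R P_ predT) /=.
rewrite (eq_bigl (fun g => g \in family (tagged_with (fun x : 'I_m => Y x)))); last first.
  by move=> g; rewrite andbT.
rewrite -(bigA_distr_big_dep (fun i => tagged_with Y i) (fun i j => untag 0 (P_ i) j)).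
apply: eq_bigr => i _.
rewrite (big_tag (fun j => G j)).
apply: eq_big => x; first by [].
move=> _; rewrite /P_ /untag; case: eqP => // e; by rewrite ffunE.
Qed.

Lemma garble_le (Z W A : finType) (E : Theta -> Z -> R) (Kg : Z -> W -> R)
    (u : Theta -> A -> R) :
  (0 < #|A|)%N -> (forall z w, 0 <= Kg z w) -> (forall z, \sum_w Kg z w = 1) ->
  value (fun th w => \sum_z E th z * Kg z w) u <= value E u.
Proof.
move=> cA K0 K1; have [a0 _] := card_gt0P cA.
set Pb := fun th w => _.
have [gE HgE] : exists gE : Z -> R, forall z, ismax (fun _ => True) (lpay E u z) (gE z).
  apply: (@fin_all_exists Z (fun=> R) (fun z g => ismax (fun _ => True) (lpay E u z) g)) => z.
  exact: ismax_ex a0.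
have [gP HgP] : exists gP : W -> R, forall w, ismax (fun _ => True) (lpay Pb u w) (gP w).
  apply: (@fin_all_exists W (fun=> R) (fun w g => ismax (fun _ => True) (lpay Pb u w) g)) => w.
  exact: ismax_ex a0.
rewrite (value_eq HgE) (value_eq HgP).
apply: (@le_trans _ _ (\sum_w \sum_z Kg z w * gE z)).
  apply: ler_sum => w _; have [[a _ <-] _] := HgP w.
  rewrite /lpay /Pb.
  have -> : \sum_th (\sum_z E th z * Kg z w) * u th a = \sum_z Kg z w * lpay E u z a.
    rewrite /lpay; under eq_bigr do rewrite mulr_suml.
    rewrite exchange_big /=; apply: eq_bigr => z _; rewrite mulr_sumr.
    by apply: eq_bigr => th _; ring.
  apply: ler_sum => z _; apply: ler_wpM2l => //.
  by have [_ H] := HgE z; apply: H.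
rewrite exchange_big /=; apply: ler_sum => z _.
by rewrite -mulr_suml K1 mul1r.
Qed.

End Final.

Theorem lemma3 (R : realType) (m : nat) (Y : 'I_m -> finType)
  (P : forall j : 'I_m, Theta -> Y j -> R) :
  (forall j, experiment (P j)) ->
  exists Pbar : Theta -> prodY Y -> R,
    in_couplings P Pbar /\
    blackwell_sup P Pbar /\
    (forall (A : finType), (0 < #|A|)%N -> forall (u : Theta -> A -> R)
       (Q : Theta -> prodY Y -> R),
       in_couplings P Q -> value Pbar u <= value Q u).
Proof.
move=> HP.
have [EZ [E [HE [HEj HEs]]]] := hull_exists R m Y P HP.
have EgeP : forall j, more_informative E (P j).
  by move=> j; apply: D_lemma => //; apply: HEj.
have [K HK] : exists K : forall j, EZ -> Y j -> R, forall j, stoch (K j) /\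
    forall th y, P j th y = \sum_i E th i * K j i y.
  apply: (@fin_all_exists 'I_m (fun j => EZ -> Y j -> R)
    (fun j Kj => stoch Kj /\ forall th y, P j th y = \sum_i E th i * Kj i y)) => j.
  by have [Kj H1 H2] := BT (HP j) (EgeP j); exists Kj.
pose Kp (i : EZ) (y : prodY Y) : R := \prod_j K j i (y j).
pose Pbar th (y : prodY Y) := \sum_i E th i * Kp i y.
have Kp0 : forall i y, 0 <= Kp i y.
  move=> i y; apply: prodr_ge0 => j _; have [h _] := HK j; have [h0 _] := h i; exact: h0.
have Kp1 : forall i, \sum_y Kp i y = 1.
  move=> i; rewrite /Kp /prodY (sum_prod (fun j x => K j i x)) big1 // => j _.
  by have [h _] := HK j; have [_ h1] := h i; exact: h1.
have marg : forall i j0 (yj : Y j0), \sum_(y : prodY Y | y j0 == yj) Kp i y = K j0 i yj.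
  move=> i j0 yj.
  pose G j (x : Y j) := K j i x * ((Tagged Y x == Tagged Y yj) || (j != j0))%:R.
  transitivity (\sum_(y : prodY Y) \prod_j G j (y j)).
    rewrite big_mkcond /=; apply: eq_bigr => y _.
    rewrite /G big_split /= /Kp [X in _ * X](bigD1 j0) //= [X in _ * (_ * X)]big1; last first.
      by move=> j /negbTE ->; rewrite orbT.
    rewrite eqxx orbF mulr1.
    have -> : (Tagged Y (y j0) == Tagged Y yj) = (y j0 == yj).
      case Ey: (y j0 == yj); first by move/eqP: Ey => ->; rewrite eqxx.
      apply/negbTE/negP => /eqP hT; have h := eq_from_Tagged hT.
      by rewrite h eqxx in Ey.
    by case: (y j0 == yj); rewrite ?mulr1 ?mulr0.
  rewrite /prodY (sum_prod G) (bigD1 j0) //= [X in _ * X]big1 ?mulr1.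
    rewrite (bigD1 yj) //= /G eqxx orTb mulr1 big1 ?addr0 // => x xne.
    have -> : (Tagged Y x == Tagged Y yj) = false.
      apply/negbTE/negP => /eqP hT; have e := eq_from_Tagged hT.
      by rewrite e eqxx in xne.
    by rewrite eqxx /= mulr0.
  move=> j jne; rewrite /G; under eq_bigr do rewrite jne orbT mulr1.
  by have [h _] := HK j; have [_ h1] := h i; exact: h1.
have HPbar : experiment Pbar.
  move=> th; have [h0 h1] := HE th; split.
    by move=> y; apply: sumr_ge0 => i _; apply: mulr_ge0.
  rewrite /Pbar exchange_big /= -h1; apply: eq_bigr => i _.
  by rewrite -mulr_sumr Kp1 mulr1.
have Hc : in_couplings P Pbar.
  split => // th j yj; rewrite /Pbar exchange_big /=.
  have [_ h] := HK j; rewrite h; apply: eq_bigr => i _.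
  by rewrite -mulr_sumr marg.
have ge_j : forall Q, in_couplings P Q -> forall j, more_informative Q (P j).
  move=> Q [HQ HQm] j A cA u.
  have -> : P j = (fun th w => \sum_z Q th z * (z j == w)%:R).
    apply/boolp.funext => th; apply/boolp.funext => w.
    rewrite -HQm big_mkcond /=; apply: eq_bigr => z _.
    by case: (z j == w); rewrite ?mulr1 ?mulr0.
  apply: garble_le => // z.
  by rewrite (bigD1 (z j)) //= eqxx big1 ?addr0 // => w /negbTE; rewrite eq_sym => ->.
have ub : forall (Z : finType) (S : Theta -> Z -> R), experiment S ->
    (forall j, more_informative S (P j)) -> more_informative S Pbar.
  move=> Z S HS HSj A cA u.
  have SE : more_informative S E.
    apply: D_lemma => // l hl; apply: HEs => // j l' hl'.
    exact: mi_hinge (HSj j).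
  apply: le_trans (SE A cA u).
  exact: garble_le.
exists Pbar; split => //; split.
  split => //; split; first exact: ge_j.
  exact: ub.
move=> A cA u Q HQ; exact: ub _ Q HQ.1 (ge_j Q HQ) A cA u.
Qed.
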